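(* $\mathcal{F}_1^{\sigma_1}\not\leq_e\mathcal{F}_2^{\sigma_2}$ and $\mathcal{F}_2^{\sigma_2}\not\leq_e\mathcal{F}_1^{\sigma_1}$ for all formalisms $\mathcal{F}_1,\mathcal{F}_2\in\{\mathrm{AF},\mathrm{SETAF},\mathrm{BADF},\mathrm{ADF}\}$ and all semantics $\sigma_1,\sigma_2\in\{\mathrm{adm},\mathrm{com},\mathrm{prf},\mathrm{mod}\}$ with $\sigma_1\neq\sigma_2$.
   Context: Let $A$ be a finite set of statements; an interpretation is $v:A\to\{\mathbf{t},\mathbf{f},\mathbf{u}\}$. The information ordering is $\mathbf{u}<_i\mathbf{t}$, $\mathbf{u}<_i\mathbf{f}$, extended pointwise; $[v]_2$ is the set of two-valued interpretations extending $v$. An ADF is $D=(A,L,C)$ with an acceptance formula $\varphi_a$ over the parents of each statement $a$. $\Gamma_D(v)(a)$ is the greatest lower bound w.r.t. $\leq_i$ (consensus: $\mathbf{t}$ if all $\mathbf{t}$, $\mathbf{f}$ if all $\mathbf{f}$, else $\mathbf{u}$) of $\{w(\varphi_a)\mid w\in[v]_2\}$. $v$ is admissible iff $v\leq_i\Gamma_D(v)$, complete iff $\Gamma_D(v)=v$, preferred iff $\leq_i$-maximal admissible, a two-valued model iff two-valued and $\Gamma_D(v)=v$. BADFs are ADFs in which every link is supporting or attacking; AFs $(A,R)$ correspond to ADFs with $\varphi_a=\bigwedge_{(b,a)\in R}\neg b$; SETAFs $(A,X)$ correspond to ADFs with $\varphi_a=\bigwedge_{(B,a)\in X}\bigvee_{a'\in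 B}\neg a'$; all inherit the four semantics. The signature of formalism $\mathcal{F}$ under semantics $\sigma$ is $\Sigma^\sigma_\mathcal{F}=\{\sigma(kb)\mid kb\in\mathcal{F}\}$, and $\mathcal{F}_1^{\sigma_1}\leq_e\mathcal{F}_2^{\sigma_2}$ iff $\Sigma^{\sigma_1}_{\mathcal{F}_1}\subseteq\Sigma^{\sigma_2}_{\mathcal{F}_2}$ (taken over the same vocabularies). *)

(* Defs.v *)
From mathcomp Require Import all_boot.
Set Implicit Arguments. Unset Strict Implicit. Unset Printing Implicit Defensive.

(* Three truth values: t = Some true, f = Some false, u = None. *)
Notation val3 := (option bool).

Inductive formula (A : Type) : Type :=
| FTop | FBot | FVar of A | FNeg of formula A
| FAnd of formula A & formula A | FOr of formula A & formula A.
Arguments FTop {A}. Arguments FBot {A}.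

Fixpoint feval (A : Type) (w : A -> bool) (phi : formula A) : bool :=
  match phi with
  | FTop => true | FBot => false | FVar a => w a
  | FNeg p => ~~ feval w p
  | FAnd p q => feval w p && feval w q
  | FOr p q => feval w p || feval w q
  end.

Fixpoint occurs (A : eqType) (b : A) (phi : formula A) : bool :=
  match phi with
  | FTop | FBot => false | FVar a => a == b
  | FNeg p => occurs b p
  | FAnd p q | FOr p q => occurs b p || occurs b q
  end.

Definition bigAnd (A : Type) (s : seq (formula A)) := foldr (@FAnd A) FTop s.
Definition bigOr (A : Type) (s : seq (formula A)) := foldr (@FOr A) FBot s.

Record adf (A : finType) := ADF { link : rel A; acc : A -> formula A }.

Definition adf_wf (A : finType) (D : adf A) : Prop :=
  forall a b : A, occurs b (acc D a) -> link D b a.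

Definition interp (A : finType) := {ffun A -> val3}.

Definition leq_i (A : finType) (v w : interp A) : bool :=
  [forall a, (v a == None) || (v a == w a)].

Definition ext2 (A : finType) (v : interp A) (w : {ffun A -> bool}) : bool :=
  [forall a, if v a is Some b then w a == b else true].

Definition Gamma (A : finType) (D : adf A) (v : interp A) : interp A :=
  [ffun a => if [forall w : {ffun A -> bool}, ext2 v w ==> feval w (acc D a)]
             then Some true
             else if [forall w : {ffun A -> bool}, ext2 v w ==> ~~ feval w (acc D a)]
             then Some false else None].

Definition admissible (A : finType) (D : adf A) (v : interp A) : Prop :=
  leq_i v (Gamma D v).
Definition complete (A : finType) (D : adf A) (v : interp A) : Prop :=
  Gamma D v = v.
Definition preferred (A : finType) (D : adf A) (v : interp A) : Prop :=
  admissible D v /\ forall w, admissible D w -> leq_i v w -> w = v.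
Definition two_valued_model (A : finType) (D : adf A) (v : interp A) : Prop :=
  (forall a, v a != None) /\ Gamma D v = v.

Inductive semantics := adm | com | prf | mod.

Definition sem (s : semantics) (A : finType) (D : adf A) : interp A -> Prop :=
  match s with
  | adm => admissible D | com => complete D
  | prf => preferred D | mod => two_valued_model D
  end.

Definition upd (A : finType) (w : {ffun A -> bool}) (b : A) (x : bool) :
  {ffun A -> bool} := [ffun c => if c == b then x else w c].

Definition supporting (A : finType) (D : adf A) (b a : A) : Prop :=
  forall w, feval (upd w b false) (acc D a) -> feval (upd w b true) (acc D a).
Definition attacking (A : finType) (D : adf A) (b a : A) : Prop :=
  forall w, feval (upd w b true) (acc D a) -> feval (upd w b false) (acc D a).

Definition adf_of_af (A : finType) (R : rel A) : adf A :=
  ADF R (fun a => bigAnd [seq FNeg (FVar b) | b <- enum A & R b a]).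

Definition setaf_wf (A : finType) (X : {set {set A} * A}) : Prop :=
  forall B a, (B, a) \in X -> B != set0.
Definition adf_of_setaf (A : finType) (X : {set {set A} * A}) : adf A :=
  ADF (fun b a => [exists B : {set A}, ((B, a) \in X) && (b \in B)])
      (fun a => bigAnd [seq bigOr [seq FNeg (FVar a') | a' <- enum (mem p.1)]
                       | p : {set A} * A <- enum (mem X) & p.2 == a]).

Inductive formalism := AFs | SETAFs | BADFs | ADFs.

Definition in_formalism (F : formalism) (A : finType) (D : adf A) : Prop :=
  match F with
  | AFs => exists R : rel A, D = adf_of_af R
  | SETAFs => exists X : {set {set A} * A}, setaf_wf X /\ D = adf_of_setaf X
  | BADFs => adf_wf D /\ forall b a, link D b a -> supporting D b a \/ attacking D b a
  | ADFs => adf_wf D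
  end.

Definition exp_leq (F1 : formalism) (s1 : semantics) (F2 : formalism) (s2 : semantics) : Prop :=
  forall (A : finType) (D1 : adf A), in_formalism F1 D1 ->
    exists D2 : adf A, in_formalism F2 D2 /\ forall v, sem s1 D1 v <-> sem s2 D2 v.

(* Main.v *)
Require Import Defs.
From mathcomp Require Import all_boot.
From Stdlib Require Import FunctionalExtensionality.
Set Implicit Arguments. Unset Strict Implicit. Unset Printing Implicit Defensive.

Section Gen.
Variable A : finType.
Implicit Types (D : adf A) (v w : interp A).

Definition bot : interp A := [ffun _ => None].
Definition twov v := forall a, v a != None.
Definition tv v : {ffun A -> bool} := [ffun a => odflt false (v a)].

Lemma leq_iP v w : reflect (forall a, v a = None \/ v a = w a) (leq_i v w).
Proof.
apply: (iffP forallP) => H a.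
- by case/orP: (H a) => /eqP; auto.
- by case: (H a) => ->; rewrite eqxx ?orbT.
Qed.

Lemma leq_i_refl v : leq_i v v.
Proof. by apply/leq_iP => a; right. Qed.

Lemma leq_i_bot v : leq_i bot v.
Proof. by apply/leq_iP => a; left; rewrite ffunE. Qed.

Lemma ext2_bot (u : {ffun A -> bool}) : ext2 bot u.
Proof. by apply/forallP => a; rewrite ffunE. Qed.

Lemma ext2_tv_self v : ext2 v (tv v).
Proof. by apply/forallP => a; rewrite /tv ffunE; case: (v a). Qed.

Lemma ext2_tv v (w : {ffun A -> bool}) : twov v -> ext2 v w = (w == tv v).
Proof.
move=> Hv; apply/forallP/eqP => [H|->]; last exact/forallP/ext2_tv_self.
apply/ffunP => a; rewrite /tv ffunE; move: (H a) (Hv a).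
by case: (v a) => [b /eqP ->|].
Qed.

Lemma Gamma_tv D v a : twov v -> Gamma D v a = Some (feval (tv v) (acc D a)).
Proof.
move=> Hv; rewrite ffunE.
case: ifP => [/forallP H | /negbT H1].
- by move: (H (tv v)); rewrite ext2_tv // eqxx /= => ->.
- case: ifP => [/forallP H|/negbT H2].
  + by move: (H (tv v)); rewrite ext2_tv // eqxx /= => /negbTE ->.
  + exfalso. move/forallPn: H1 => [w]; rewrite ext2_tv // negb_imply => /andP[/eqP -> H1].
    move/forallPn: H2 => [w']; rewrite ext2_tv // negb_imply negbK => /andP[/eqP -> H2].
    by rewrite H2 in H1.
Qed.

Lemma Gamma_bot_None D a (w1 w2 : {ffun A -> bool}) :
  feval w1 (acc D a) -> ~~ feval w2 (acc D a) -> Gamma D bot a = None.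
Proof.
move=> H1 H2; rewrite ffunE.
case: ifP => [/forallP H|_]; first by move: (H w2); rewrite ext2_bot /= (negbTE H2).
case: ifP => [/forallP H|//]; by move: (H w1); rewrite ext2_bot /= H1.
Qed.

Lemma ext2_mono v w (u : {ffun A -> bool}) : leq_i v w -> ext2 w u -> ext2 v u.
Proof.
move=> /leq_iP H /forallP H2; apply/forallP => a; case: (H a) => [->//|->]; exact: H2.
Qed.

Lemma Gamma_mono D v w : leq_i v w -> leq_i (Gamma D v) (Gamma D w).
Proof.
move=> Hvw; apply/leq_iP => a; rewrite !ffunE.
case: ifP => [/forallP H|_].
  right; rewrite ifT //; apply/forallP => u; apply/implyP => Hu.
  exact: (implyP (H u) (ext2_mono Hvw Hu)).
case: ifP => [/forallP H|_]; last by left.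
have H' : [forall u : {ffun A -> bool}, ext2 w u ==> ~~ feval u (acc D a)].
  apply/forallP => u; apply/implyP => Hu; exact: (implyP (H u) (ext2_mono Hvw Hu)).
right; rewrite H' ifF //.
apply/negP => /forallP H2.
have := implyP (H2 (tv w)) (ext2_tv_self w).
by move: (implyP (forallP H' (tv w)) (ext2_tv_self w)) => /negbTE ->.
Qed.

Lemma twov_max v w : twov v -> leq_i v w -> w = v.
Proof.
move=> Hv /leq_iP H; apply/ffunP => a.
by case: (H a) => E; [move: (Hv a); rewrite E eqxx | rewrite E].
Qed.

Lemma com_adm D v : complete D v -> admissible D v.
Proof. by rewrite /admissible /complete => ->; apply: leq_i_refl. Qed.

Lemma sem_ext s D D' v : (forall x, Gamma D x = Gamma D' x) -> sem s D v <-> sem s D' v.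
Proof.
move=> /functional_extensionality E; case: s => /=; rewrite /preferred /two_valued_model /admissible /complete ?E; tauto.
Qed.

Lemma prf_anti D v w : preferred D v -> preferred D w -> leq_i v w -> w = v.
Proof. by move=> [_ H] [Hw _]; apply: H. Qed.

Definition cnt v := #|[pred a | v a != None]|.

Lemma prf_exists D : exists v, preferred D v.
Proof.
have Hb : admissible D bot by exact: leq_i_bot.
case: (@arg_maxnP _ bot (fun x => leq_i x (Gamma D x)) cnt Hb) => v Hv Hmax.
exists v; split; first exact: Hv.
move=> w Hw Hvw.
have Hc := Hmax w Hw.
have Hsub : [pred a | v a != None] \subset [pred a | w a != None].
  apply/subsetP => a; rewrite !inE.
  by move/leq_iP: Hvw => /(_ a) [->|<-].
have Heq : cnt v = cnt w by apply/eqP; rewrite eqn_leq subset_leq_card // andbT; exact: Hc.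
move/(subset_cardP Heq): Hsub => Hi.
apply/ffunP => a; move/leq_iP: Hvw => /(_ a) [E|->//].
have := Hi a; rewrite !inE E /=.
by case: (w a).
Qed.

Lemma feval_bigAnd (w : A -> bool) s : feval w (bigAnd s) = all (feval w) s.
Proof. by elim: s => //= x s ->. Qed.
Lemma feval_bigOr (w : A -> bool) s : feval w (bigOr s) = has (feval w) s.
Proof. by elim: s => //= x s ->. Qed.

Lemma feval_af (R : rel A) (w : A -> bool) a :
  feval w (acc (adf_of_af R) a) = [forall b, R b a ==> ~~ w b].
Proof.
rewrite /= feval_bigAnd all_map all_filter.
apply/allP/forallP => H b; first by apply: H; rewrite mem_enum.
by move=> _; apply: H.
Qed.

Lemma feval_setaf (X : {set {set A} * A}) (w : A -> bool) a :
  feval w (acc (adf_of_setaf X) a) =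
  [forall p in X, (p.2 == a) ==> [exists a' in p.1, ~~ w a']].
Proof.
rewrite /= feval_bigAnd all_map all_filter.
apply/allP/forallP => H p.
- apply/implyP => pX; have := H p; rewrite mem_enum => /(_ pX) /=.
  rewrite feval_bigOr has_map; case: (_ == _) => //= /hasP [x].
  by rewrite mem_enum => xp Hx; apply/existsP; exists x; rewrite xp.
- rewrite mem_enum => pX /=; have := implyP (H p) pX.
  case: (_ == _) => //= /existsP [x /andP [xp Hx]].
  by rewrite feval_bigOr has_map; apply/hasP; exists x; rewrite ?mem_enum.
Qed.

Lemma Gamma_feval D D' : (forall a (w : {ffun A -> bool}), feval w (acc D a) = feval w (acc D' a)) -> forall v, Gamma D v = Gamma D' v.
Proof.
move=> H v; apply/ffunP => a; rewrite !ffunE.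
under eq_forallb => w do rewrite H.
case: ifP => // _.
by under eq_forallb => w do rewrite H.
Qed.

End Gen.
Arguments bot {A}.

Definition tu : interp unit := [ffun _ => Some true].
Definition fu : interp unit := [ffun _ => Some false].

Lemma twov_unit (v : interp unit) b : v tt = Some b -> twov v.
Proof. by move=> E [] ; rewrite E. Qed.

Lemma twov_tu : twov tu. Proof. by move=> a; rewrite ffunE. Qed.
Lemma twov_fu : twov fu. Proof. by move=> a; rewrite ffunE. Qed.

Lemma ffun_unit (T : Type) (f g : {ffun unit -> T}) : f tt = g tt -> f = g.
Proof. by move=> E; apply/ffunP => -[]. Qed.

Lemma com_unit (D : adf unit) :
  Gamma D bot = bot -> Gamma D tu = tu -> Gamma D fu = fu.
Proof.
move=> Hb Ht.
have Ft : feval (tv tu) (acc D tt).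
  by move: (Gamma_tv D tt twov_tu); rewrite Ht ffunE => -[<-].
have : Gamma D bot tt = None by rewrite Hb ffunE.
rewrite ffunE; case: ifP => // /negbT /forallPn [w]; rewrite ext2_bot /= => Hw.
case: ifP => // _ _.
apply: ffun_unit; rewrite Gamma_tv; last exact: twov_fu.
have Ew : w = tv fu.
  apply: ffun_unit; rewrite /tv !ffunE /=.
  case E: (w tt) => //.
  suff : w = tv tu by move=> Ew; move: Hw; rewrite Ew Ft.
  by apply: ffun_unit; rewrite /tv !ffunE.
by rewrite -Ew (negbTE Hw) ffunE.
Qed.

Definition TTm : adf unit := ADF (fun _ _ => false) (fun _ => FTop).
Definition SAm : adf unit := ADF (fun _ _ => true) (fun a => FNeg (FVar a)).

Lemma Gamma_TT v : Gamma TTm v = tu.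
Proof. apply: ffun_unit; rewrite !ffunE ifT //; apply/forallP => w; by rewrite implybT. Qed.

Lemma Gamma_SA_bot : Gamma SAm bot = bot.
Proof.
apply: ffun_unit; rewrite [bot tt]ffunE.
by rewrite (@Gamma_bot_None _ _ _ [ffun=> false] [ffun => true]) //= ffunE.
Qed.

Lemma Gamma_SA_twov (v : interp unit) b : v tt = Some b -> Gamma SAm v tt = Some (~~ b).
Proof.
move=> E; rewrite Gamma_tv; last exact: twov_unit E.
by rewrite /= /tv ffunE E.
Qed.

Lemma SA_adm (v : interp unit) : admissible SAm v -> v = bot.
Proof.
move=> /leq_iP /(_ tt); case E: (v tt) => [b|] [] // => [|_|_].
- by rewrite (Gamma_SA_twov E) => -[]; case: b {E}.
- by apply: ffun_unit; rewrite E ffunE.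
- by apply: ffun_unit; rewrite E ffunE.
Qed.

Lemma SA_nomod (v : interp unit) : ~ two_valued_model SAm v.
Proof.
move=> [Hv E]; move: (Hv tt); case E': (v tt) => [b|] // _.
by move: (Gamma_SA_twov E'); rewrite E E' => -[]; case: b {E'}.
Qed.

Lemma bot_ne_tu : tu <> bot.
Proof. by move/ffunP/(_ tt); rewrite !ffunE. Qed.

Definition tfb : interp bool := [ffun b => Some b].
Definition ftb : interp bool := [ffun b => Some (~~ b)].
Definition MUm : adf bool := ADF (fun b a => b != a) (fun a => FNeg (FVar (~~ a))).

Lemma twov_tfb : twov tfb. Proof. by move=> a; rewrite ffunE. Qed.
Lemma twov_ftb : twov ftb. Proof. by move=> a; rewrite ffunE. Qed.

Lemma Gamma_MU_tf : Gamma MUm tfb = tfb.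
Proof. apply/ffunP => a; rewrite Gamma_tv; last exact: twov_tfb. by rewrite /= /tv !ffunE negbK. Qed.
Lemma Gamma_MU_ft : Gamma MUm ftb = ftb.
Proof. apply/ffunP => a; rewrite Gamma_tv; last exact: twov_ftb. by rewrite /= /tv !ffunE /= negbK. Qed.
Lemma Gamma_MU_bot : Gamma MUm bot = bot.
Proof.
apply/ffunP => a; rewrite [bot a]ffunE.
by rewrite (@Gamma_bot_None _ _ _ [ffun=> false] [ffun => true]) //= ffunE.
Qed.

Lemma com_glb (D : adf bool) : Gamma D tfb = tfb -> Gamma D ftb = ftb -> Gamma D bot = bot.
Proof.
move=> E1 E2.
have /leq_iP H1 := Gamma_mono D (leq_i_bot tfb).
have /leq_iP H2 := Gamma_mono D (leq_i_bot ftb).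
rewrite E1 in H1; rewrite E2 in H2.
apply/ffunP => a; rewrite [bot a]ffunE.
case: (H1 a) => // E1a; case: (H2 a) => //; rewrite E1a !ffunE.
by case: a {E1a}.
Qed.

Lemma tfb_ne_bot : tfb <> bot.
Proof. by move/ffunP/(_ true); rewrite !ffunE. Qed.

Lemma MU_prf_tf : preferred MUm tfb.
Proof. split; first by apply: com_adm; exact: Gamma_MU_tf. by move=> w _; apply: twov_max twov_tfb. Qed.
Lemma MU_prf_ft : preferred MUm ftb.
Proof. split; first by apply: com_adm; exact: Gamma_MU_ft. by move=> w _; apply: twov_max twov_ftb. Qed.
Lemma MU_nprf_bot : ~ preferred MUm bot.
Proof.
move=> [_ H]; apply: tfb_ne_bot; apply: H (leq_i_bot _).
apply: com_adm; exact: Gamma_MU_tf.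
Qed.

Lemma set1_n0 (T : finType) (x : T) : [set x] != set0.
Proof. by apply/eqP => E; have := set11 x; rewrite E inE. Qed.

Lemma inst_TT F : exists D, in_formalism F D /\ forall v, Gamma D v = Gamma TTm v.
Proof.
case: F.
- exists (adf_of_af (fun _ _ : unit => false)); split; first by exists (fun _ _ => false).
  by apply: Gamma_feval => a w; rewrite feval_af /=; apply/forallP => b.
- exists (adf_of_setaf (set0 : {set {set unit} * unit})); split.
    by exists set0; split => // B a; rewrite inE.
  by apply: Gamma_feval => a w; rewrite feval_setaf /=; apply/forallP => p; rewrite inE.
- by exists TTm; split => //; split => // a b.
- by exists TTm; split => // a b.
Qed.

Lemma inst_SA F : exists D, in_formalism F D /\ forall v, Gamma D v = Gamma SAm v.
Proof.
case: F.
- exists (adf_of_af (fun _ _ : unit => true)); split; first by exists (fun _ _ => true).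
  apply: Gamma_feval => a w; rewrite feval_af /=.
  apply/forallP/idP => [H|H b]; first exact: H a.
  by case: a H; case: b => /= ->.
- exists (adf_of_setaf [set ([set tt], tt)]); split.
    by exists [set ([set tt], tt)]; split => // B a; rewrite inE => /eqP [-> _]; apply: set1_n0.
  apply: Gamma_feval => a w; rewrite feval_setaf /=.
  apply/forallP/idP => [H|H p].
  + have := H ([set tt], tt); rewrite inE eqxx; case: a {H} => /implyP /(_ isT).
    by case/existsP => x /andP []; rewrite inE => /eqP ->.
  + apply/implyP; rewrite inE => /eqP ->; apply/existsP; exists tt.
    by rewrite inE eqxx; case: a H.
- exists SAm; split => //; split => // b a _; right => w.
  by rewrite /= /upd !ffunE; case: a; case: b; rewrite eqxx.
- by exists SAm; split => // a b.
Qed.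

Lemma inst_MU F : exists D, in_formalism F D /\ forall v, Gamma D v = Gamma MUm v.
Proof.
case: F.
- exists (adf_of_af (fun b a : bool => b != a)); split; first by exists (fun b a => b != a).
  apply: Gamma_feval => a w; rewrite feval_af /=.
  apply/forallP/idP => [H|H b].
  + by have := H (~~ a); case: a {H} => /=.
  + by case: a H; case: b => /= H.
- pose X : {set {set bool} * bool} := [set ([set true], false); ([set false], true)].
  exists (adf_of_setaf X); split.
    exists X; split => // B a; rewrite in_set2 => /orP [] /eqP [-> _]; apply: set1_n0.
  apply: Gamma_feval => a w; rewrite feval_setaf /=.
  apply/forallP/idP => [H|H p].
  + have imp2 : forall b c d : bool, b ==> (c ==> d) -> b -> c -> d by move=> [] [] [].
    have Hf : ([set false], true) \in X by rewrite /X in_set2 eqxx orbT.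
    have Ht : ([set true], false) \in X by rewrite /X in_set2 eqxx.
    case: a H.
    * move=> H; have := imp2 _ _ _ (H ([set false], true)) Hf (eqxx _).
      by case/existsP => x /andP []; rewrite inE => /eqP ->.
    * move=> H; have := imp2 _ _ _ (H ([set true], false)) Ht (eqxx _).
      by case/existsP => x /andP []; rewrite inE => /eqP ->.
  + apply/implyP; rewrite /X in_set2 => /orP [] /eqP ->; apply/implyP => /eqP Ea; subst a;
      apply/existsP.
    * by exists true; rewrite inE eqxx.
    * by exists false; rewrite inE eqxx.
- exists MUm; split => //; split.
    by move=> a b /= /eqP <-; case: a.
  move=> b a Hl; right => w.
  by rewrite /= /upd !ffunE; case: a Hl; case: b.
- exists MUm; split => //.
  by move=> a b /= /eqP <-; case: a.
Qed.

Lemma refute s1 s2 F1 F2 (A : finType) (M : adf A) :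
  (forall F, exists D, in_formalism F D /\ forall v, Gamma D v = Gamma M v) ->
  (forall D2 : adf A, ~ (forall v, sem s1 M v <-> sem s2 D2 v)) -> ~ exp_leq F1 s1 F2 s2.
Proof.
move=> HI HD Hexp; case: (HI F1) => D1 [H1 E]; case: (Hexp A D1 H1) => D2 [_ H2].
apply: (HD D2) => v; move: (H2 v) (sem_ext s1 v E); tauto.
Qed.

Lemma TT_adm_tu : admissible TTm tu.
Proof. by rewrite /admissible Gamma_TT; apply: leq_i_refl. Qed.

Lemma bot_not_twov (A : finType) (a : A) : ~ twov (@bot A).
Proof. by move=> /(_ a); rewrite ffunE. Qed.

Lemma c_adm_com (D2 : adf unit) : ~ (forall v, sem adm TTm v <-> sem com D2 v).
Proof.
move=> H.
have Hb : complete D2 bot by apply/(H bot); exact: leq_i_bot.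
have Ht : complete D2 tu by apply/(H tu); exact: TT_adm_tu.
have /(H fu) : complete D2 fu := com_unit Hb Ht.
rewrite /= /admissible Gamma_TT => /leq_iP /(_ tt); rewrite !ffunE; by case.
Qed.

Lemma c_adm_prf (D2 : adf unit) : ~ (forall v, sem adm TTm v <-> sem prf D2 v).
Proof.
move=> H.
have Hb : preferred D2 bot by apply/(H bot); exact: leq_i_bot.
have Ht : preferred D2 tu by apply/(H tu); exact: TT_adm_tu.
exact: bot_ne_tu (prf_anti Hb Ht (leq_i_bot _)).
Qed.

Lemma c_adm_mod (D2 : adf unit) : ~ (forall v, sem adm TTm v <-> sem mod D2 v).
Proof.
move=> H.
have [Hb _] : two_valued_model D2 bot by apply/(H bot); exact: leq_i_bot.
exact: bot_not_twov tt Hb.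
Qed.

Lemma c_com_adm (D2 : adf unit) : ~ (forall v, sem com TTm v <-> sem adm D2 v).
Proof.
move=> H.
have : complete TTm bot by apply/(H bot); exact: leq_i_bot.
rewrite /complete Gamma_TT; exact: bot_ne_tu.
Qed.

Lemma c_com_prf (D2 : adf bool) : ~ (forall v, sem com MUm v <-> sem prf D2 v).
Proof.
move=> H.
have Hb : preferred D2 bot by apply/(H bot); exact: Gamma_MU_bot.
have Ht : preferred D2 tfb by apply/(H tfb); exact: Gamma_MU_tf.
exact: tfb_ne_bot (prf_anti Hb Ht (leq_i_bot _)).
Qed.

Lemma c_com_mod (D2 : adf unit) : ~ (forall v, sem com SAm v <-> sem mod D2 v).
Proof.
move=> H.
have [Hb _] : two_valued_model D2 bot by apply/(H bot); exact: Gamma_SA_bot.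
exact: bot_not_twov tt Hb.
Qed.

Lemma c_prf_adm (D2 : adf unit) : ~ (forall v, sem prf TTm v <-> sem adm D2 v).
Proof.
move=> H.
have [_ Hm] : preferred TTm bot by apply/(H bot); exact: leq_i_bot.
exact: bot_ne_tu (Hm tu TT_adm_tu (leq_i_bot _)).
Qed.

Lemma c_prf_com (D2 : adf bool) : ~ (forall v, sem prf MUm v <-> sem com D2 v).
Proof.
move=> H.
have Ht : complete D2 tfb by apply/(H tfb); exact: MU_prf_tf.
have Hf : complete D2 ftb by apply/(H ftb); exact: MU_prf_ft.
have /(H bot) : complete D2 bot := com_glb Ht Hf.
exact: MU_nprf_bot.
Qed.

Lemma SA_prf_bot : preferred SAm bot.
Proof. split; first exact: leq_i_bot. by move=> w Hw _; apply: SA_adm. Qed.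

Lemma c_prf_mod (D2 : adf unit) : ~ (forall v, sem prf SAm v <-> sem mod D2 v).
Proof.
move=> H.
have [Hb _] : two_valued_model D2 bot by apply/(H bot); exact: SA_prf_bot.
exact: bot_not_twov tt Hb.
Qed.

Lemma c_mod_adm (D2 : adf unit) : ~ (forall v, sem mod TTm v <-> sem adm D2 v).
Proof.
move=> H.
have [Hb _] : two_valued_model TTm bot by apply/(H bot); exact: leq_i_bot.
exact: bot_not_twov tt Hb.
Qed.

Lemma c_mod_com (D2 : adf bool) : ~ (forall v, sem mod MUm v <-> sem com D2 v).
Proof.
move=> H.
have Ht : complete D2 tfb by apply/(H tfb); split; [exact: twov_tfb | exact: Gamma_MU_tf].
have Hf : complete D2 ftb by apply/(H ftb); split; [exact: twov_ftb | exact: Gamma_MU_ft].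
have /(H bot) [Hb _] : complete D2 bot := com_glb Ht Hf.
exact: bot_not_twov true Hb.
Qed.

Lemma c_mod_prf (D2 : adf unit) : ~ (forall v, sem mod SAm v <-> sem prf D2 v).
Proof.
move=> H; case: (prf_exists D2) => v /(H v); exact: SA_nomod.
Qed.

Lemma key F1 F2 s1 s2 : s1 <> s2 -> ~ exp_leq F1 s1 F2 s2.
Proof.
case: s1; case: s2 => Hne; try (by case: Hne).
all: first [ (apply: (refute (M:=TTm)); [exact: inst_TT | exact: c_adm_com]) | (apply: (refute (M:=TTm)); [exact: inst_TT | exact: c_adm_prf]) | (apply: (refute (M:=TTm)); [exact: inst_TT | exact: c_adm_mod]) | (apply: (refute (M:=TTm)); [exact: inst_TT | exact: c_com_adm]) | (apply: (refute (M:=MUm)); [exact: inst_MU | exact: c_com_prf]) | (apply: (refute (M:=SAm)); [exact: inst_SA | exact: c_com_mod]) | (apply: (refute (M:=TTm)); [exact: inst_TT | exact: c_prf_adm]) | (apply: (refute (M:=MUm)); [exact: inst_MU | exact: c_prf_com]) | (apply: (refute (M:=SAm)); [exact: inst_SA | exact: c_prf_mod]) | (apply: (refute (M:=TTm)); [exact: inst_TT | exact: c_mod_adm]) | (apply: (refute (M:=MUm)); [exact: inst_MU | exact: c_mod_com]) | (apply: (refute (M:=SAm)); [exact: inst_SA | exact: c_mod_prf]) ].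
Qed.

Theorem proposition6 :
  forall (F1 F2 : formalism) (s1 s2 : semantics), s1 <> s2 ->
    ~ exp_leq F1 s1 F2 s2 /\ ~ exp_leq F2 s2 F1 s1.
Proof.
move=> F1 F2 s1 s2 H; split; apply: key => // E; exact: H.
Qed.
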